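(* Let $n\le l$ be positive integers, let $L_l=\{a_1<\dots<a_l\}$ be the linearly ordered semilattice of $l$ elements, and let $t(X)=s(X)$ be an equation over $L_l$ in the variables $X=\{x_1,\dots,x_n\}$ in which every variable occurs, with solution set $Y=V(t(X)=s(X))$. Then $Y=\bigcup_\sigma Y_\sigma$, the union over all permutations $\sigma$ of $\{1,\dots,n\}$ of the first or second kind, is the decomposition of $Y$ into its irreducible components (i.e. each $Y_\sigma$ is irreducible and $Y_\sigma\not\subseteq Y_{\sigma'}$ for $\sigma\neq\sigma'$). In particular, the number of irreducible components of $Y$ equals the number of permutations of $\{1,\dots,n\}$ of the first and second kind.
   Context: $L_l$ has multiplication $a_ia_j=a_{\min(i,j)}$. A term is a commutative word in $x_1,\dots,x_n$; $\mathrm{Var}(t)$ is the set of variables occurring in $t$. An equation is an ordered pair of terms $t(X)=s(X)$; $P\in L_l^n$ is a solution if $t(P)=s(P)$; $x\le y$ abbreviates $xy=x$. For a system $S$, $V(S)$ is its set of common solutions; $Y\subseteq L_l^n$ is algebraic if $Y=V(S)$ for some system $S$; an algebraic set is irreducible if it is not a proper finite union of other algebraic sets. Every algebraic set is uniquely (up to order) a finite union $Y_1\cup\dots\cup Y_m$ of irreducible algebraic sets with $Y_i\not\subseteq Y_j$ for $i\ne j$; these $Y_i$ are its irreducible components. A permutation $\sigma$ of $\{1,\dots,n\}$ is of the first kind if $x_{\sigma(1)}\in\mathrm{Var}(t)\cap\mathrm{Var}(s)$, and of the second kind if $x_{\sigma(1)}\in\mathrm{Var}(s)\setminus\mathrm{Var}(t)$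 and $x_{\sigma(2)}\in\mathrm{Var}(t)\setminus\mathrm{Var}(s)$. For $\sigma$ of the first kind, $Y_\sigma=V(\{x_{\sigma(i)}\le x_{\sigma(i+1)}:1\le i\le n-1\})$; for $\sigma$ of the second kind, $Y_\sigma=V(\{x_{\sigma(1)}=x_{\sigma(2)}\}\cup\{x_{\sigma(i)}\le x_{\sigma(i+1)}:2\le i\le n-1\})$. *)

(* Defs.v *)
From mathcomp Require Import all_boot.
From mathcomp Require Import perm.
Set Implicit Arguments. Unset Strict Implicit. Unset Printing Implicit Defensive.

(* L_l is modelled by 'I_l, where the ordinal i stands for a_{i+1};
   the product a_i a_j = a_{min(i,j)} is minn on the underlying naturals.
   A point of L_l^n is a function 'I_n -> 'I_l (variable x_{k+1} is k : 'I_n). *)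
Definition point (n l : nat) := 'I_n -> 'I_l.

(* A term is a (nonempty) commutative word in the variables: a first
   variable followed by a list of further variables (repetitions allowed). *)
Definition term (n : nat) := ('I_n * seq 'I_n)%type.

Definition Var n (t : term n) : seq 'I_n := t.1 :: t.2.

Definition eval n l (P : point n l) (t : term n) : nat :=
  foldr (fun i m => minn (P i) m) (P t.1 : nat) t.2.

Definition equation (n : nat) := (term n * term n)%type.

Definition is_solution n l (P : point n l) (e : equation n) : Prop :=
  eval P e.1 = eval P e.2.

Definition pset (n l : nat) := point n l -> Prop.
Definition system (n : nat) := equation n -> Prop.

Definition V n l (S : system n) : pset n l :=
  fun P => forall e, S e -> is_solution P e.

Definition set_eq n l (A B : pset n l) : Prop := forall P, A P <-> B P.
Definition psubset n l (A B : pset n l) : Prop := forall P, A P -> B P.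

Definition algebraic n l (Y : pset n l) : Prop :=
  exists S : system n, set_eq Y (@V n l S).

Definition irreducible n l (Y : pset n l) : Prop :=
  algebraic Y /\
  forall (m : nat) (Ys : 'I_m -> pset n l),
    (forall i, algebraic (Ys i)) ->
    set_eq Y (fun P => exists i, Ys i P) ->
    exists i, set_eq (Ys i) Y.

(* The equation x <= y, i.e. x y = x, and the equation x = y. *)
Definition le_eqn n (x y : 'I_n) : equation n := ((x, [:: y]), (x, [::])).
Definition eq_eqn n (x y : 'I_n) : equation n := ((x, [::]), (y, [::])).

(* Permutations of the first and second kind (position k : 'I_n with val k = 0
   is position 1 of the paper, val k = 1 is position 2). *)
Definition first_kind n (e : equation n) (sigma : {perm 'I_n}) : bool :=
  [exists i0 : 'I_n, (val i0 == 0) &&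
     ((sigma i0 \in Var e.1) && (sigma i0 \in Var e.2))].

Definition second_kind n (e : equation n) (sigma : {perm 'I_n}) : bool :=
  [exists i0 : 'I_n, exists i1 : 'I_n, [&& val i0 == 0, val i1 == 1,
     (sigma i0 \in Var e.2) && (sigma i0 \notin Var e.1) &
     (sigma i1 \in Var e.1) && (sigma i1 \notin Var e.2)]].

Definition sys_first n (sigma : {perm 'I_n}) : system n :=
  fun e => exists i j : 'I_n, val j = (val i).+1 /\ e = le_eqn (sigma i) (sigma j).

Definition sys_second n (sigma : {perm 'I_n}) : system n :=
  fun e =>
    (exists i0 i1 : 'I_n, val i0 = 0 /\ val i1 = 1 /\ e = eq_eqn (sigma i0) (sigma i1))
    \/ (exists i j : 'I_n, 1 <= val i /\ val j = (val i).+1 /\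
          e = le_eqn (sigma i) (sigma j)).

Definition Ysigma n l (e : equation n) (sigma : {perm 'I_n}) : pset n l :=
  if first_kind e sigma then @V n l (sys_first sigma) else @V n l (sys_second sigma).

(* Main.v *)
Require Import Defs.
From mathcomp Require Import all_boot.
From mathcomp Require Import perm.
From mathcomp Require Import zify.
Set Implicit Arguments. Unset Strict Implicit. Unset Printing Implicit Defensive.

Lemma chain_mono (f : nat -> nat) c n :
  (forall k, c <= k -> k.+1 < n -> f k <= f k.+1) ->
  forall i j, c <= i -> i <= j -> j < n -> f i <= f j.
Proof.
move=> H i j ci; elim: j => [|j IH] ij jn.
  by have -> : i = 0 by lia.
case: (ltngtP i j.+1) => [h|h|<-]; last by [].
  apply: leq_trans (IH _ _) (H _ _ _); lia.
lia.
Qed.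

Lemma strict_shift (g : nat -> nat) c n :
  (forall k, c <= k -> k.+1 < n -> g k < g k.+1) ->
  forall k m, c <= k -> k + m < n -> g k + m <= g (k + m).
Proof.
move=> H k m ck; elim: m => [|m IH] km; first by rewrite !addn0.
have a1 : k + m < n by move: km; clear; move=> km; lia.
have a2 : c <= k + m by lia.
have a3 : (k + m).+1 < n by lia.
have := IH a1; have := H (k + m) a2 a3.
rewrite !addnS; lia.
Qed.

Lemma strict_id (g : nat -> nat) c n :
  (forall k, c <= k -> k.+1 < n -> g k < g k.+1) ->
  (forall k, k < n -> g k < n) -> c <= g c ->
  forall k, c <= k -> k < n -> g k = k.
Proof.
move=> H B gc k ck kn.
have h1 := strict_shift H (k := c) (m := k - c) (leqnn c) ltac:(lia).
have h2 := strict_shift H (k := k) (m := n.-1 - k) ck ltac:(lia).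
have h3 := B (k + (n.-1 - k)) ltac:(lia).
have e : c + (k - c) = k by lia.
rewrite e in h1. lia.
Qed.

Definition evalf n (F : 'I_n -> nat) (t : term n) : nat :=
  foldr (fun i m => minn (F i) m) (F t.1) t.2.

Lemma evalE n l (P : point n l) t : eval P t = evalf (fun x => P x) t.
Proof. by []. Qed.

Lemma evalf_le n (F : 'I_n -> nat) t x : x \in Var t -> evalf F t <= F x.
Proof.
case: t => h s; rewrite /Var /evalf /=.
elim: s => [|y s IH] /=; first by rewrite inE => /eqP ->.
move=> xin; rewrite !inE in xin; case/orP: xin => [/eqP xh|/orP[/eqP xy|xs]].
- by apply: leq_trans (geq_minr _ _) (IH _); rewrite xh inE eqxx.
- by rewrite xy geq_minl.
- by apply: leq_trans (geq_minr _ _) (IH _); rewrite inE xs orbT.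
Qed.

Lemma evalf_att n (F : 'I_n -> nat) t : exists2 x, x \in Var t & evalf F t = F x.
Proof.
case: t => h s; rewrite /Var /evalf /=.
elim: s => [|y s [x xin IH]] /=; first by exists h; rewrite ?inE.
case: (leqP (F y) (foldr (fun i m => minn (F i) m) (F h) s)) => c.
  by exists y; [rewrite !inE eqxx orbT | lia].
exists x; last lia.
by move: xin; rewrite !inE => /orP[->|->]; rewrite ?orbT.
Qed.

Lemma evalf_gen n (F G : 'I_n -> nat) :
  (forall x y, G x <= G y -> F x <= F y) ->
  forall t, exists x, evalf G t = G x /\ evalf F t = F x.
Proof.
move=> H [h s]; rewrite /evalf /=.
elim: s => [|y s [x [IH1 IH2]]] /=; first by exists h.
case: (leqP (G y) (foldr (fun i m => minn (G i) m) (G h) s)) => c.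
  exists y; split; first lia.
  rewrite IH1 in c; have := H _ _ c; rewrite IH2; lia.
exists x; split; first lia.
rewrite IH1 in c; have := H x y (ltnW c); rewrite IH2; lia.
Qed.


Lemma construct n (F : 'I_n -> nat) (a b : 'I_n) :
  (forall z, F a <= F z) -> F a = F b ->
  exists sigma : {perm 'I_n},
    (forall i : 'I_n, val i = 0 -> sigma i = a) /\
    (a != b -> forall i : 'I_n, val i = 1 -> sigma i = b) /\
    (forall i j : 'I_n, i <= j -> F (sigma i) <= F (sigma j)).
Proof.
move=> Fmin Fab.
pose T x := (if x == a then 0 else if x == b then 1 else 2).
have tb : forall x, T x <= 2 by move=> x; rewrite /T; case: ifP => //; case: ifP.
pose K x := 3 * F x + T x.
pose leT := fun x y => K x <= K y.
pose s := sort leT (enum 'I_n).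
have ss : size s = n by rewrite size_sort size_enum_ord.
have us : uniq s by rewrite sort_uniq enum_uniq.
have ms : forall x, x \in s by move=> x; rewrite mem_sort mem_enum.
have so : sorted leT s by apply: sort_sorted => x y; exact: leq_total.
have tr : transitive leT by move=> x y z; exact: leq_trans.
have rf : reflexive leT by move=> x; exact: leqnn.
have hs : forall i j, i <= j -> j < n -> K (nth a s i) <= K (nth a s j).
  move=> i j ij jn; apply: (sorted_leq_nth tr rf a so) => //; rewrite inE ss; lia.
have finj : injective (fun i : 'I_n => nth a s i).
  move=> i j /eqP; rewrite nth_uniq ?ss // => /eqP; exact: val_inj.
exists (perm finj); split; [|split].
- move=> i i0; rewrite permE i0.
  have ka : index a s < n by have := index_mem a s; rewrite ss ms.
  have := hs 0 (index a s) (leq0n _) ka; rewrite nth_index //.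
  case: (nth a s 0 =P a) => // /eqP/negbTE ne; rewrite /K /T eqxx ne; have := Fmin (nth a s 0).
  case: (_ == b) => /= ? ?; exfalso; lia.
- move=> nab i i1; rewrite permE i1.
  have n1 : 1 < n by rewrite -i1; exact: ltn_ord.
  have s0 : nth a s 0 = a.
    have ka : index a s < n by have := index_mem a s; rewrite ss ms.
    have := hs 0 (index a s) (leq0n _) ka; rewrite nth_index //.
    case: (nth a s 0 =P a) => // /eqP/negbTE ne; rewrite /K /T eqxx ne; have := Fmin (nth a s 0).
    case: (_ == b) => /= ? ?; exfalso; lia.
  have kb : index b s < n by have := index_mem b s; rewrite ss ms.
  have kb1 : 1 <= index b s.
    case: (posnP (index b s)) => // e; move: nab.
    by rewrite -s0 -e nth_index ?eqxx.
  have := hs 1 (index b s) kb1 kb; rewrite nth_index //.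
  have s1a : nth a s 1 != a.
    by rewrite -[X in _ != X]s0 nth_uniq ?ss //; lia.
  case: (nth a s 1 =P b) => // ne; have nba : (b == a) = false by rewrite eq_sym (negbTE nab).
  rewrite /K /T (negbTE s1a) eqxx nba.
  have := Fmin (nth a s 1).
  move/eqP/negbTE: ne => ->; rewrite -Fab => ? ?; exfalso; lia.
- move=> i j ij; rewrite !permE.
  have := hs i j ij (ltn_ord j); rewrite /K.
  have := tb (nth a s i); have := tb (nth a s j); lia.
Qed.


Definition rk (b : bool) (k : nat) := if b then k else k.-1.

Definition Mono n l (b : bool) (sigma : {perm 'I_n}) (P : point n l) :=
  forall i j : 'I_n, rk b i <= rk b j -> P (sigma i) <= P (sigma j).

Lemma sol_le n l (P : point n l) x y : is_solution P (le_eqn x y) <-> P x <= P y.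
Proof. rewrite /is_solution /=; split; [move/minn_idPr|move/minn_idPr]; done. Qed.

Lemma sol_eq n l (P : point n l) x y : is_solution P (eq_eqn x y) <-> (P x : nat) = P y.
Proof. by []. Qed.

Lemma ordchain n l (P : point n l) (sigma : {perm 'I_n}) c :
  (forall i j : 'I_n, val j = (val i).+1 -> c <= val i -> P (sigma i) <= P (sigma j)) ->
  forall i j : 'I_n, c <= i -> i <= j -> P (sigma i) <= P (sigma j).
Proof.
move=> H i j ci ij.
pose f k := (P (sigma (insubd i k)) : nat).
have fE : forall k : 'I_n, f k = P (sigma k) by move=> k; rewrite /f valKd.
rewrite -!fE; apply: (chain_mono (c := c) (n := n)) => //.
move=> k ck kn; rewrite /f.
have vk : val (insubd i k : 'I_n) = k by rewrite val_insubd (ltnW kn).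
have vk1 : val (insubd i k.+1 : 'I_n) = k.+1 by rewrite val_insubd kn.
by apply: H; rewrite ?vk ?vk1.
Qed.

Lemma Y_Mono n l (e : equation n) sigma (P : point n l) :
  first_kind e sigma || second_kind e sigma ->
  Ysigma e sigma P <-> Mono (first_kind e sigma) sigma P.
Proof.
rewrite /Ysigma /Mono /rk; case: ifP => fk /= sk.
  split.
    move=> HV i j ij; apply: (ordchain (c := 0)) => // i' j' e1 _.
    by apply/sol_le; apply: HV; exists i', j'.
  move=> HM e' [i [j [ij ->]]]; apply/sol_le; apply: HM; have : val i <= val j by rewrite ij. done.
case/existsP: sk => i0 /existsP [i1 /and3P [/eqP v0 /eqP v1 _]].
split.
  move=> HV.
  have e01 : (P (sigma i0) : nat) = P (sigma i1).
    by apply: (HV (eq_eqn (sigma i0) (sigma i1))); left; exists i0, i1.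
  have ch := ordchain (c := 1) (P := P) (sigma := sigma)
    (fun i' j' h1 h2 => proj1 (sol_le _ _ _) (HV _ (or_intror (ex_intro _ i' (ex_intro _ j' (conj h2 (conj h1 erefl))))))).
  pose m (i : 'I_n) := if val i == 0 then i1 else i.
  have mE : forall i, (P (sigma i) : nat) = P (sigma (m i)).
    move=> i; rewrite /m; case: eqP => // h.
    by have -> : i = i0 by apply: val_inj; rewrite h v0.
  have m1 : forall i, 1 <= val (m i).
    move=> i; rewrite /m; case: eqP => [_|h]; first by rewrite v1.
    by rewrite lt0n; apply/eqP.
  move=> i j ij; rewrite (mE i) (mE j); apply: ch; first exact: m1.
  move: ij; rewrite /m; case: i => [i hi]; case: j => [j hj] /=; case: eqP; case: eqP; rewrite /= ?v1; lia.
move=> HM e' [[j0 [j1 [w0 [w1 ->]]]]|[i [j [ii [ij ->]]]]].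
  apply/sol_eq; apply/eqP; rewrite eqn_leq !HM //; rewrite w0 w1 //.
apply/sol_le; apply: HM; move: ii ij; case: i => [i hi]; case: j => [j hj] /=; lia.
Qed.

Lemma rk_le b k : rk b k <= k.
Proof. by rewrite /rk; case: b => //; exact: leq_pred. Qed.

Lemma rk_lt n l (H : n <= l) b (i : 'I_n) : rk b i < l.
Proof. exact: leq_ltn_trans (rk_le b i) (leq_trans (ltn_ord i) H). Qed.

Definition Qpt n l (H : n <= l) (b : bool) (sigma : {perm 'I_n}) : point n l :=
  fun x => Ordinal (rk_lt H b ((sigma^-1)%g x)).

Lemma QptE n l (H : n <= l) b sigma (i : 'I_n) : (Qpt H b sigma (sigma i) : nat) = rk b i.
Proof. by rewrite /Qpt /= permK. Qed.

Lemma Qpt_Mono n l (H : n <= l) b sigma : Mono b sigma (Qpt H b sigma).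
Proof. by move=> i j; rewrite !QptE. Qed.

Lemma Mono_gen n l b sigma (P : point n l) (H : n <= l) :
  Mono b sigma P ->
  forall x y, (Qpt H b sigma x : nat) <= Qpt H b sigma y -> (P x : nat) <= P y.
Proof.
move=> HM x y; rewrite -(permKV sigma x) -(permKV sigma y) !QptE; exact: HM.
Qed.

Lemma gen_sol n l (P Q : point n l) :
  (forall x y, (Q x : nat) <= Q y -> (P x : nat) <= P y) ->
  forall e', is_solution Q e' -> is_solution P e'.
Proof.
move=> H e'; rewrite /is_solution !evalE.
have [x1 [q1 p1]] := evalf_gen H e'.1.
have [x2 [q2 p2]] := evalf_gen H e'.2.
rewrite q1 q2 p1 p2 => hq; apply/eqP; rewrite eqn_leq !H // hq //.
Qed.

Lemma Mono_min n l b sigma (P : point n l) (i : 'I_n) :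
  Mono b sigma P -> rk b i = 0 -> forall z, (P (sigma i) : nat) <= P z.
Proof. by move=> HM r z; rewrite -(permKV sigma z); apply: HM; rewrite r. Qed.

Lemma evalf_min n (F : 'I_n -> nat) t m :
  (forall z, F m <= F z) -> m \in Var t -> evalf F t = F m.
Proof.
move=> Hm mt; apply/eqP; rewrite eqn_leq evalf_le //=.
by have [w _ ->] := evalf_att F t.
Qed.


Lemma perm_id_from n (pi : {perm 'I_n}) c :
  (forall i j : 'I_n, c <= i -> val j = (val i).+1 -> pi i < pi j) ->
  (forall i : 'I_n, val i = c -> c <= pi i) ->
  forall i : 'I_n, c <= i -> pi i = i.
Proof.
move=> Hs Hc i ci; apply: val_inj => /=.
pose g k := nat_of_ord (pi (insubd i k)).
have gE : forall k : 'I_n, g k = pi k by move=> k; rewrite /g valKd.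
rewrite -gE; apply: (strict_id (c := c) (n := n)) => //.
- move=> k ck kn; rewrite /g.
  have vk : val (insubd i k : 'I_n) = k by rewrite val_insubd (ltnW kn).
  have vk1 : val (insubd i k.+1 : 'I_n) = k.+1 by rewrite val_insubd kn.
  by apply: Hs; rewrite ?vk ?vk1.
- by move=> k _; rewrite /g.
- have cn : c < n by apply: leq_ltn_trans ci (ltn_ord i).
  rewrite /g; apply: Hc; by rewrite val_insubd cn.
Qed.


Ltac unv := change (\val ?x) with (nat_of_ord x) in *.
Ltac ulia := try unv; lia.

Theorem theorem1 (n l : nat) (e : equation n) :
  0 < n -> n <= l ->
  (forall x : 'I_n, (x \in Var e.1) || (x \in Var e.2)) ->
  let Y := @V n l (fun e' => e' = e) in
  let kinds := fun sigma : {perm 'I_n} => first_kind e sigma || second_kind e sigma in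
  set_eq Y (fun P => exists sigma, kinds sigma /\ @Ysigma n l e sigma P) /\
  (forall sigma, kinds sigma -> irreducible (@Ysigma n l e sigma)) /\
  (forall sigma sigma', kinds sigma -> kinds sigma' -> sigma <> sigma' ->
     ~ psubset (@Ysigma n l e sigma) (@Ysigma n l e sigma')).
Proof.
move=> n0 Hnl Hcov Y kinds.
split.
{ move=> P; split.
  - move=> HY.
    have sol : is_solution P e by apply: HY.
    move: sol; rewrite /is_solution !evalE => sol.
    have [x xA ex] := evalf_att (fun z => (P z : nat)) e.1.
    have [y yB ey] := evalf_att (fun z => (P z : nat)) e.2.
    have xmin : forall z, (P x : nat) <= P z.
      move=> z; rewrite -ex; case/orP: (Hcov z) => zin.
        exact: evalf_le.
      rewrite sol; exact: evalf_le.
    have Pxy : (P x : nat) = P y by rewrite -ex -ey.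
    have FK : forall a, a \in Var e.1 -> a \in Var e.2 -> (P a : nat) = P x ->
        exists sigma, kinds sigma /\ Ysigma e sigma P.
      move=> a aA aB Pa.
      have amin : forall z, (P a : nat) <= P z by move=> z; rewrite Pa; exact: xmin.
      have [sigma [s0 [_ sch]]] := construct (F := fun z => (P z : nat)) amin erefl.
      have fk : first_kind e sigma.
        by apply/existsP; exists (Ordinal n0); rewrite /= (s0 (Ordinal n0) erefl) aA aB.
      have ks : kinds sigma by rewrite /kinds fk.
      exists sigma; split => //.
      apply/(Y_Mono P ks); rewrite fk => i j; exact: sch.
    case xB: (x \in Var e.2); first exact: FK x xA xB erefl.
    case yA: (y \in Var e.1); first exact: FK y yA yB (esym Pxy).
    have nyx : y != x by apply/eqP => h; move: yA; rewrite h xA.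
    have n1 : 1 < n.
      case: (ltnP 1 n) => // h; exfalso; move/eqP: nyx; apply; apply/val_inj => /=.
      have := ltn_ord y; have := ltn_ord x; ulia.
    have ymin : forall z, (P y : nat) <= P z by move=> z; rewrite -Pxy; exact: xmin.
    have [sigma [s0 [s1 sch]]] := construct (F := fun z => (P z : nat)) ymin (esym Pxy).
    have s0' := s0 (Ordinal n0) erefl.
    have s1' := s1 nyx (Ordinal n1) erefl.
    have fkF : first_kind e sigma = false.
      apply/negbTE/existsP => [[i /andP [/eqP v /andP [h _]]]].
      have ie : i = Ordinal n0 by apply: val_inj.
      by move: h; rewrite ie s0' yA.
    have sk : second_kind e sigma.
      apply/existsP; exists (Ordinal n0); apply/existsP; exists (Ordinal n1).
      by rewrite /= s0' s1' yB yA xA xB.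
    have ks : kinds sigma by rewrite /kinds sk orbT.
    exists sigma; split => //.
    apply/(Y_Mono P ks); rewrite fkF /rk => i j ij.
    case: (leqP i j) => h; first exact: sch.
    rewrite /rk in ij; have vi : val i = 1 by ulia.
    have vj : val j = 0 by ulia.
    have -> : i = Ordinal n1 by apply: val_inj.
    have -> : j = Ordinal n0 by apply: val_inj.
    by rewrite s0' s1' Pxy.
  - move=> [sigma [ks HYs]].
    have HM := proj1 (Y_Mono P ks) HYs.
    move=> e' ->; rewrite /is_solution !evalE.
    move: HM; case fk: (first_kind e sigma) => HM.
      case/existsP: fk => i /andP [/eqP v /andP [iA iB]].
      have mn := Mono_min HM (i := i) v.
      by rewrite (evalf_min mn iA) (evalf_min mn iB).
    move: ks; rewrite /kinds fk /= => /existsP [i0 /existsP [i1 /and4P [/eqP v0 /eqP v1 /andP [i0B _] /andP [i1A _]]]].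
    have mn0 := Mono_min HM (i := i0) ltac:(by rewrite /rk v0).
    have mn1 := Mono_min HM (i := i1) ltac:(by rewrite /rk v1).
    rewrite (evalf_min mn1 i1A) (evalf_min mn0 i0B).
    by apply/eqP; rewrite eqn_leq mn0 mn1.
}
split.
{ move=> sigma ks; split.
  - rewrite /Ysigma; case: ifP => _.
      by exists (sys_first sigma) => P.
    by exists (sys_second sigma) => P.
  - move=> m Ys alg Hun.
    pose Q := Qpt Hnl (first_kind e sigma) sigma.
    have QY : Ysigma e sigma Q by apply/(Y_Mono Q ks); exact: Qpt_Mono.
    have [i Qi] := proj1 (Hun Q) QY.
    exists i => P; split; first by move=> h; apply/(Hun P); exists i.
    move=> HP; have [S HS] := alg i; apply/HS; move/HS: Qi => Qi e' Se'.
    apply: (gen_sol (Q := Q)); last exact: Qi.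
    exact: Mono_gen (proj1 (Y_Mono P ks) HP).
}
move=> sigma sigma' ks ks' neq sub; apply: neq.
pose Q := Qpt Hnl (first_kind e sigma) sigma.
have QY' : Ysigma e sigma' Q by apply: sub; apply/(Y_Mono Q ks); exact: Qpt_Mono.
have HM := proj1 (Y_Mono Q ks') QY'.
pose pi := (sigma' * sigma^-1)%g.
have piE : forall i, (Q (sigma' i) : nat) = rk (first_kind e sigma) (pi i).
  by move=> i; rewrite /Q /Qpt /= permM.
have H : forall i j : 'I_n, rk (first_kind e sigma') i <= rk (first_kind e sigma') j ->
    rk (first_kind e sigma) (pi i) <= rk (first_kind e sigma) (pi j).
  by move=> i j h; rewrite -!piE; exact: HM.
have spi : forall i, sigma (pi i) = sigma' i by move=> i; rewrite permM permKV.
suff pid : forall i, pi i = i.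
  by apply/permP => i; rewrite -spi pid.
move: H; case fk: (first_kind e sigma); case fk': (first_kind e sigma') => H.
- move=> i; apply: (perm_id_from (c := 0)) => // i' j' _ ij.
  have le : rk true (pi i') <= rk true (pi j') by apply: H; rewrite /rk; ulia.
  rewrite /rk in le; rewrite ltn_neqAle le andbT.
  apply/negP => /eqP/val_inj/perm_inj ei; move: ij; rewrite ei; ulia.
- move: ks'; rewrite /kinds fk' /= => /existsP [j0 /existsP [j1 /and4P [/eqP w0 /eqP w1 _ _]]].
  have a : rk true (pi j0) <= rk true (pi j1) by apply: H; rewrite /rk w0 w1.
  have b : rk true (pi j1) <= rk true (pi j0) by apply: H; rewrite /rk w0 w1.
  rewrite /rk in a b.
  have : pi j0 = pi j1 by apply: val_inj; apply/eqP; rewrite eqn_leq a b.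
  move/perm_inj => ej; exfalso; move: w1; by rewrite -ej w0.
- move: ks; rewrite /kinds fk /= => /existsP [i0 /existsP [i1 /and4P [/eqP v0 /eqP v1 /andP [i0B i0nA] /andP [i1A i1nB]]]].
  case/existsP: fk' => j0 /andP [/eqP w0 /andP [j0A j0B]].
  pose k := ((pi^-1)%g i0).
  have hk : rk false (pi j0) <= rk false (pi k) by apply: H; rewrite /rk w0.
  rewrite /k permKV /rk v0 in hk.
  exfalso; case E: (val (pi j0) == 0).
    have h : pi j0 = i0 by apply: val_inj; rewrite (eqP E) v0.
    by move: j0A; rewrite -spi h (negbTE i0nA).
  have h : pi j0 = i1 by apply: val_inj; rewrite v1; move/negbT: E => E; ulia.
  by move: j0B; rewrite -spi h (negbTE i1nB).
- move: ks; rewrite /kinds fk /= => /existsP [i0 /existsP [i1 /and4P [/eqP v0 /eqP v1 /andP [i0B i0nA] /andP [i1A i1nB]]]].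
  move: ks'; rewrite /kinds fk' /= => /existsP [j0 /existsP [j1 /and4P [/eqP w0 /eqP w1 /andP [j0B j0nA] /andP [j1A j1nB]]]].
  have ej0 : j0 = i0 by apply: val_inj; rewrite w0 v0.
  have ej1 : j1 = i1 by apply: val_inj; rewrite w1 v1.
  subst j0 j1.
  have h0 : forall k, rk false (pi i0) <= rk false (pi k) by move=> k; apply: H; rewrite /rk v0.
  have p0 := h0 ((pi^-1)%g i0); rewrite permKV /rk v0 in p0.
  have pi0 : pi i0 = i0.
    case E: (val (pi i0) == 0); first by apply: val_inj; rewrite (eqP E) v0.
    have h : pi i0 = i1 by apply: val_inj; rewrite v1; move/negbT: E => E; ulia.
    by move: j0nA; rewrite -spi h i1A.
  have pne : forall k, k != i0 -> 0 < val (pi k).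
    move=> k nk; rewrite lt0n; apply/negP => /eqP z.
    have : pi k = pi i0 by apply: val_inj; rewrite pi0 z v0.
    by move/perm_inj => ek; rewrite ek eqxx in nk.
  move=> i; case: (posnP (val i)) => vi.
    by have -> : i = i0 by apply: val_inj; rewrite vi v0.
  apply: (perm_id_from (c := 1)) => //.
    move=> i' j' ci ij.
    have nei : i' != i0 by apply/eqP => z; move: ci; rewrite z v0.
    have nej : j' != i0 by apply/eqP => z; move: ij; rewrite z v0.
    have le : rk false (pi i') <= rk false (pi j') by apply: H; rewrite /rk; ulia.
    rewrite /rk in le; have q1 := pne _ nei; have q2 := pne _ nej.
    rewrite ltn_neqAle; apply/andP; split; last first.
      by move: le q1 q2; clear; case: (pi i') => a ha; case: (pi j') => b hb /=; lia.
    apply/negP => /eqP/val_inj/perm_inj ei; move: ij; rewrite ei.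
    by clear; case: j' => a ha /=; lia.
  move=> i' vi'; have -> : i' = i1 by apply: val_inj; rewrite vi' v1.
  apply: pne; apply/eqP => z; move: v1; by rewrite z v0.
Qed.
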